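(* Assume the walk's transition probabilities $p$ are non-reversible: there do not exist $m_V:\tilde V\to\mathbb{R}$, not identically zero, and $m_E:\tilde E\to\mathbb{R}$ with $p(a)m_V(o(a))=p(\bar a)m_V(t(a))=m_E(|a|)$ for all $a\in\tilde A$. Let $\Psi_\infty$ be the stationary state, and set $$\boldsymbol{\alpha}_{in}=[\Psi_\infty(e_1),\dots,\Psi_\infty(e_r)]^\top,\qquad \boldsymbol{\beta}_{out}=[\Psi_\infty(\bar e_1),\dots,\Psi_\infty(\bar e_r)]^\top.$$ Then $\boldsymbol{\beta}_{out}=-\boldsymbol{\alpha}_{in}$. Moreover: 1. $\sum_{a\in\tilde A:\,t(a)=u}\sqrt{p(\bar a)}\,\Psi_\infty(a)=0$ for every $u\in\tilde V$; 2. $\Psi_\infty(\bar a)=-\Psi_\infty(a)$ for every $a\in\tilde A$; 3. $\Psi_\infty$ is orthogonal to $\ker(1-\chi^*E_{PON}\chi)$. That is, for every $\varphi:\tilde A\to\mathbb{C}$ with $\varphi=\chi^*E_{PON}\chi\varphi$, we have $\sum_{a\in\tilde A}\overline{\varphi(a)}\Psi_\infty(a)=0$. Such $\varphi$ is supported on $A_0$, so the sum is finite.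
   Context: **Symmetric directed graphs.** A symmetric directed graph $(V,A)$ has the following structure. - Each arc $a$ has an origin $o(a)$ and a terminus $t(a)$. - Each arc $a$ has an inverse arc $\bar a$ with $o(\bar a)=t(a)$, $t(\bar a)=o(a)$ and $\bar{\bar a}=a$. - $|a|=|\bar a|$ denotes the undirected edge. **The tailed graph.** - Let $G_0=(V_0,A_0)$ be a finite symmetric directed graph and let $r\ge1$. - For $j=1,\dots,r$, let $\mathbb{P}_j$ be a semi-infinite path (''tail'') with vertices $v^j_0,v^j_1,\dots$ and arcs $A(\mathbb{P}_j)$ in both directions between consecutive vertices. - The end vertex is $o(\mathbb{P}_j)=v^j_0$. We require $V(\mathbb{P}_j)\cap V_0=\{o(\mathbb{P}_j)\}$, and distinct tails share no vertices outside $V_0$. - Let $\tilde G=(\tilde V,\tilde A)=G_0\cup\bigcup_j\mathbb{P}_j$, with undirected edge set $\tilde E$. - Let $e_j$ be the arc from $v^j_1$ to $o(\mathbb{P}_j)$. **Transition probabilities.** Let $p:\tilde A\to(0,1]$ satisfy: - $\sum_{o(a)=u}p(a)=1$ for all $u\in\tilde V$; - $p(a)=1/2$ on $\bigcup_jA(\mathbb{P}_j)\setminus\{\bar e_1,\dots,\bar e_r\}$. **Szegedy walk.** For $\Psi:\tilde A\to\mathbb{C}$, $$(U\Psi)(a)=\sum_{b:\,t(b)=o(a)}\big(2\sqrt{p(a)p(\bar b)}-\delta_{\bar a,b}\big)\Psi(b).$$ **Restriction operators.** - $\chi:\mathbb{C}^{\tilde A}\to\mathbb{C}^{A_0}$ is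 restriction to $A_0$. - $\chi^*$ is extension by zero. - $E_{PON}=\chi U\chi^*$, the restriction of $U$ to $A_0$. **Initial state and stationary state.** Fix $\alpha_1,\dots,\alpha_r\in\mathbb{C}$. - $\Psi_0(a)=\alpha_j$ for $a\in A(\mathbb{P}_j)$ with $\mathrm{dist}(o(\mathbb{P}_j),t(a))<\mathrm{dist}(o(\mathbb{P}_j),o(a))$. - $\Psi_0(a)=0$ otherwise. - Set $\Psi_{n+1}=U\Psi_n$. - The pointwise limit $\Psi_\infty=\lim_n\Psi_n$ exists (known fact) and is called the stationary state. *)

(* Defs.v *)
From HB Require Import structures.
From mathcomp Require Import all_boot all_order all_algebra.
From mathcomp Require Import complex.
From mathcomp Require Import all_classical all_reals topology normedtype sequences.

Set Implicit Arguments.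
Unset Strict Implicit.
Unset Printing Implicit Defensive.

Import Order.TTheory GRing.Theory Num.Theory.
Import numFieldNormedType.Exports.
Local Open Scope ring_scope.

(* The tailed graph  G~ = G_0 ∪ P_1 ∪ ... ∪ P_r.                            *)
(* G_0 : finite vertex type V0, finite arc type A0, origin o0, terminus t0, *)
(* inverse inv0.  Tail j is attached at the vertex att j = o(P_j) of V0.    *)
(* Vertices of G~ :  VIn v        = v ∈ V0                                   *)
(*                   VTail j n    = v^j_{n+1}   (n : nat)                    *)
(* Arcs of G~     :  AIn a        = a ∈ A0                                   *)
(*                   AOut j n     = arc v^j_n -> v^j_{n+1}  (outward)        *)
(*                   AInw j n     = arc v^j_{n+1} -> v^j_n  (inward)         *)
(* so  e_j = AInw j 0  and  \bar e_j = AOut j 0.                            *)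

(* R[i] (R real closed) is a numClosedFieldType; equip it with the standard
   metric topology of a numFieldType (the one induced by the modulus |z|),
   as MathComp-Analysis does generically for every numFieldType R via R^o. *)
HB.instance Definition _ (R : rcfType) :=
  PseudoPointedMetric.copy R[i] (R[i] : numFieldType)^o.

Inductive tvert (V0 : Type) (r : nat) : Type :=
  | VIn of V0
  | VTail of 'I_r & nat.

Inductive tarc (A0 : Type) (r : nat) : Type :=
  | AIn of A0
  | AOut of 'I_r & nat
  | AInw of 'I_r & nat.

Arguments VIn {V0 r}.
Arguments VTail {V0 r}.
Arguments AIn {A0 r}.
Arguments AOut {A0 r}.
Arguments AInw {A0 r}.

Section TarcEq.
Variables (A0 : eqType) (r : nat).
Definition tarc_to (a : tarc A0 r) : A0 + ('I_r * nat) + ('I_r * nat) :=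
  match a with
  | AIn b => inl (inl b)
  | AOut j n => inl (inr (j, n))
  | AInw j n => inr (j, n)
  end.
Definition tarc_of (x : A0 + ('I_r * nat) + ('I_r * nat)) : tarc A0 r :=
  match x with
  | inl (inl b) => AIn b
  | inl (inr (j, n)) => AOut j n
  | inr (j, n) => AInw j n
  end.
Lemma tarc_toK : cancel tarc_to tarc_of. Proof. by case. Qed.
End TarcEq.
HB.instance Definition _ (A0 : eqType) (r : nat) :=
  Equality.copy (tarc A0 r) (can_type (@tarc_toK A0 r)).

Section TvertEq.
Variables (V0 : eqType) (r : nat).
Definition tvert_to (v : tvert V0 r) : V0 + ('I_r * nat) :=
  match v with VIn x => inl x | VTail j n => inr (j, n) end.
Definition tvert_of (x : V0 + ('I_r * nat)) : tvert V0 r :=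
  match x with inl x => VIn x | inr (j, n) => VTail j n end.
Lemma tvert_toK : cancel tvert_to tvert_of. Proof. by case. Qed.
End TvertEq.
HB.instance Definition _ (V0 : eqType) (r : nat) :=
  Equality.copy (tvert V0 r) (can_type (@tvert_toK V0 r)).

Section TailedGraph.
Variables (V0 A0 : finType) (o0 t0 : A0 -> V0) (inv0 : A0 -> A0)
          (r : nat) (att : 'I_r -> V0).

Local Notation vert := (tvert V0 r).
Local Notation arc := (tarc A0 r).

(* the vertex v^j_n of the tail P_j (v^j_0 = o(P_j) = att j) *)
Definition tailv (j : 'I_r) (n : nat) : vert :=
  if n is n'.+1 then VTail j n' else VIn (att j).

Definition aorg (a : arc) : vert :=
  match a with
  | AIn b => VIn (o0 b)
  | AOut j n => tailv j n
  | AInw j n => tailv j n.+1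
  end.

Definition ater (a : arc) : vert :=
  match a with
  | AIn b => VIn (t0 b)
  | AOut j n => tailv j n.+1
  | AInw j n => tailv j n
  end.

Definition ainv (a : arc) : arc :=
  match a with
  | AIn b => AIn (inv0 b)
  | AOut j n => AInw j n
  | AInw j n => AOut j n
  end.

Definition e_ (j : 'I_r) : arc := AInw j 0.

Definition is_tail_arc (a : arc) : bool :=
  if a is AIn _ then false else true.

Definition inarcs (u : vert) : seq arc :=
  match u with
  | VIn v => [seq AIn b | b <- enum A0 & t0 b == v]
             ++ [seq AInw j 0 | j <- enum 'I_r & att j == v]
  | VTail j n => [:: AOut j n; AInw j n.+1]
  end.

Definition outarcs (u : vert) : seq arc :=
  match u with
  | VIn v => [seq AIn b | b <- enum A0 & o0 b == v]
             ++ [seq AOut j 0 | j <- enum 'I_r & att j == v]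
  | VTail j n => [:: AOut j n.+1; AInw j n]
  end.

Lemma mem_inarcs (u : vert) (a : arc) : (a \in inarcs u) = (ater a == u).
Proof.
case: u => [v|j n]; case: a => [b|k m|k m] /=; apply/idP/eqP.
- rewrite mem_cat => /orP[/mapP[b' + [->]]|/mapP[? _ //]].
  by rewrite mem_filter => /andP[/eqP ->].
- move=> [<-]; rewrite mem_cat; apply/orP; left; apply/mapP; exists b => //.
  by rewrite mem_filter eqxx mem_enum.
- by rewrite mem_cat; apply/negP => /eqP/orP[/mapP[? _ //]|/mapP[? _ //]].
- rewrite mem_cat => /orP[/mapP[? _ //]|/mapP[k' + E]].
  by case: E => -> -> /=; rewrite mem_filter => /andP[/eqP ->].
- case: m => //= -[<-]; rewrite mem_cat; apply/orP; right; apply/mapP; exists k => //.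
  by rewrite mem_filter eqxx mem_enum.
- by rewrite !inE.
- by rewrite !inE => /orP[/eqP[-> ->]|/eqP[]].
- by move=> [-> ->]; rewrite inE eqxx.
- by rewrite !inE => /orP[/eqP[]|/eqP[-> ->]].
- by case: m => // m [-> ->]; rewrite !inE eqxx orbT.
Qed.

Lemma mem_outarcs (u : vert) (a : arc) : (a \in outarcs u) = (aorg a == u).
Proof.
case: u => [v|j n]; case: a => [b|k m|k m] /=; apply/idP/eqP.
- rewrite mem_cat => /orP[/mapP[b' + [->]]|/mapP[? _ //]].
  by rewrite mem_filter => /andP[/eqP ->].
- move=> [<-]; rewrite mem_cat; apply/orP; left; apply/mapP; exists b => //.
  by rewrite mem_filter eqxx mem_enum.
- rewrite mem_cat => /orP[/mapP[? _ //]|/mapP[k' + E]].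
  by case: E => -> -> /=; rewrite mem_filter => /andP[/eqP ->].
- case: m => //= -[<-]; rewrite mem_cat; apply/orP; right; apply/mapP; exists k => //.
  by rewrite mem_filter eqxx mem_enum.
- by rewrite mem_cat; apply/negP => /eqP/orP[/mapP[? _ //]|/mapP[? _ //]].
- by rewrite !inE.
- by rewrite !inE => /orP[/eqP[-> ->]|/eqP[]].
- by case: m => // m [-> ->]; rewrite inE eqxx.
- by rewrite !inE => /orP[/eqP[]|/eqP[-> ->]].
- by move=> [-> ->]; rewrite !inE eqxx orbT.
Qed.

Lemma inarcs_uniq (u : vert) : uniq (inarcs u).
Proof.
case: u => [v|j n] /=; last by [].
rewrite cat_uniq !map_inj_uniq ?filter_uniq //; first last.
- by move=> ? ? [].
- by move=> ? ? [].
- by rewrite -enumT enum_uniq.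
- by rewrite -enumT enum_uniq.
rewrite andbT; apply/hasPn => a /mapP[? _ ->]; apply/negP => /mapP[? _ //].
Qed.

Lemma outarcs_uniq (u : vert) : uniq (outarcs u).
Proof.
case: u => [v|j n] /=; last by [].
rewrite cat_uniq !map_inj_uniq ?filter_uniq //; first last.
- by move=> ? ? [].
- by move=> ? ? [].
- by rewrite -enumT enum_uniq.
- by rewrite -enumT enum_uniq.
rewrite andbT; apply/hasPn => a /mapP[? _ ->]; apply/negP => /mapP[? _ //].
Qed.

Lemma aorg_ainv : (forall b, o0 (inv0 b) = t0 b) -> forall a, aorg (ainv a) = ater a.
Proof. by move=> H [b|k m|k m] //=; rewrite H. Qed.

Lemma ainvK : (forall b, inv0 (inv0 b) = b) -> forall a, ainv (ainv a) = a.
Proof. by move=> H [b|k m|k m] //=; rewrite H. Qed.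

Variable R : realType.
Local Notation C := R[i].
Variable p : arc -> R.

Definition Uop (Psi : arc -> C) (a : arc) : C :=
  \sum_(b <- inarcs (aorg a))
     (real_complex R (2 * Num.sqrt (p a * p (ainv b))) - (if ainv a == b then 1 else 0)) * Psi b.

Definition chi (Psi : arc -> C) : A0 -> C := fun a => Psi (AIn a).
Definition chistar (f : A0 -> C) : arc -> C :=
  fun a => if a is AIn b then f b else 0.
Definition E_PON (f : A0 -> C) : A0 -> C := chi (Uop (chistar f)).

Definition Psi0 (alpha : 'I_r -> C) (a : arc) : C :=
  if a is AInw j _ then alpha j else 0.

Definition Psi_n (alpha : 'I_r -> C) (n : nat) : arc -> C :=
  iter n Uop (Psi0 alpha).

End TailedGraph.

(* Main.v *)
Require Import Defs.
From HB Require Import structures.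
From mathcomp Require Import all_boot all_order all_algebra.
From mathcomp Require Import complex.
From mathcomp Require Import all_classical all_reals topology normedtype sequences.
Import Order.TTheory GRing.Theory Num.Theory.
Import numFieldNormedType.Exports.
Local Open Scope classical_set_scope.
Local Open Scope ring_scope.

Lemma cvgDC (R : realType) (f g : nat -> R[i]) a b :
  f n @[n --> \oo] --> a -> g n @[n --> \oo] --> b -> f n + g n @[n --> \oo] --> a + b.
Proof. move=> Ha Hb. have := @cvgD _ (R[i]:numFieldType)^o _ _ _ f g a b Ha Hb. move=> H. apply: H. Qed.

Lemma cvgMlC (R : realType) (f : nat -> R[i]) c a :
  f n @[n --> \oo] --> a -> c * f n @[n --> \oo] --> c * a.
Proof. move=> Ha. have := @cvgMl_tmp (R[i]:numFieldType) _ _ _ f c a Ha. move=> H. apply: H. Qed.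

Lemma cvg_lin (R : realType) (T : Type) (s : seq T) (c : T -> R[i])
  (u : nat -> T -> R[i]) (l : T -> R[i]) :
  (forall b, u n b @[n --> \oo] --> l b) ->
  \sum_(b <- s) c b * u n b @[n --> \oo] --> \sum_(b <- s) c b * l b.
Proof.
move=> H; elim: s => [|b s IH].
  rewrite big_nil.
  have -> : (fun n => \sum_(b <- [::]) c b * u n b) = (fun n => 0).
    by apply: funext => n; rewrite big_nil.
  apply: (@cvg_cst R[i] 0).
rewrite big_cons.
have -> : (fun n => \sum_(j <- b :: s) c j * u n j) =
          (fun n => c b * u n b + \sum_(j <- s) c j * u n j).
  by apply: funext => n; rewrite big_cons.
apply: (@cvgDC R (fun n => c b * u n b) (fun n => \sum_(j <- s) c j * u n j)); last exact: IH.
exact: (@cvgMlC R (fun n => u n b) (c b) (l b) (H b)).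
Qed.

Lemma lim_uniqC (R : realType) (u : nat -> R[i]) (a b : R[i]) :
  u n @[n --> \oo] --> a -> u n @[n --> \oo] --> b -> a = b.
Proof.
move=> Ha Hb.
have hs : hausdorff_space R[i] := @norm_hausdorff _ (R[i]:numFieldType)^o.
exact: (@cvg_unique R[i] hs _ _ a b Ha Hb).
Qed.

Lemma shiftC (R : realType) (u : nat -> R[i]) (a : R[i]) :
  u n @[n --> \oo] --> a -> u n.+1 @[n --> \oo] --> a.
Proof. move=> H. by rewrite (@cvg_shiftS R[i] u). Qed.

Definition Nc {R : realType} (z : R[i]) : R := complex.Re z ^+ 2 + complex.Im z ^+ 2.
Definition Dc {R : realType} (z w : R[i]) : R :=
  complex.Re z * complex.Re w + complex.Im z * complex.Im w.

Lemma NcE (R : realType) (z : R[i]) : Nc z = Dc z z.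
Proof. by rewrite /Nc /Dc !expr2. Qed.

Lemma NcM (R : realType) (s : R) (z : R[i]) : Nc (real_complex R s * z) = s ^+ 2 * Nc z.
Proof. case: z => a b; rewrite /Nc /=. rewrite !mul0r subr0 addr0. rewrite !exprMn. by rewrite mulrDr. Qed.

Lemma Nc_ge0 (R : realType) (z : R[i]) : 0 <= Nc z.
Proof. by rewrite /Nc addr_ge0 // sqr_ge0. Qed.

Lemma Nc_eq0 (R : realType) (z : R[i]) : Nc z = 0 -> z = 0.
Proof.
case: z => a b; rewrite /Nc /= => /eqP.
rewrite paddr_eq0 ?sqr_ge0 // !sqrf_eq0 => /andP[/eqP -> /eqP ->]. by [].
Qed.

Lemma DcDr (R : realType) (z w1 w2 : R[i]) : Dc z (w1 + w2) = Dc z w1 + Dc z w2.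
Proof. case: z => a b; case: w1 => c d; case: w2 => e f; rewrite /Dc /=. rewrite !mulrDr. rewrite !addrA. congr (_ + _). rewrite -!addrA. congr (_ + _). by rewrite addrC. Qed.

Lemma DcDl (R : realType) (z1 z2 w : R[i]) : Dc (z1 + z2) w = Dc z1 w + Dc z2 w.
Proof. case: z1 => a b; case: z2 => c d; case: w => e f; rewrite /Dc /=. rewrite !mulrDl. rewrite !addrA. congr (_ + _). rewrite -!addrA. congr (_ + _). by rewrite addrC. Qed.

Lemma DcC (R : realType) (z w : R[i]) : Dc z w = Dc w z.
Proof. by rewrite /Dc mulrC [complex.Im z * _]mulrC. Qed.

Lemma DcMl (R : realType) (s : R) (z w : R[i]) : Dc (real_complex R s * z) w = s * Dc z w.
Proof. case: z => a b; case: w => c d; rewrite /Dc /=. rewrite !mul0r subr0 addr0. by rewrite mulrDr !mulrA. Qed.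

Lemma DcMr (R : realType) (s : R) (z w : R[i]) : Dc z (real_complex R s * w) = s * Dc z w.
Proof. by rewrite DcC DcMl DcC. Qed.

Lemma Dc_sumr (R : realType) (I : Type) (s : seq I) (P : pred I) (F : I -> R[i]) (z : R[i]) :
  Dc z (\sum_(i <- s | P i) F i) = \sum_(i <- s | P i) Dc z (F i).
Proof.
apply: (big_morph (Dc z)) => [a b|]; first exact: DcDr.
by rewrite /Dc /= !mulr0 addr0.
Qed.

Lemma conjD' (R : realType) (z w : R[i]) : (z + w)^* = z^* + w^*.
Proof. case: z => a b; case: w => c d. apply/eqP; rewrite eq_complex /=. by rewrite opprD !eqxx. Qed.

Lemma conjM_rc (R : realType) (s : R) (z : R[i]) : (real_complex R s * z)^* = real_complex R s * z^*.
Proof. case: z => a b. apply/eqP; rewrite eq_complex /=. rewrite !mul0r !subr0 !addr0 mulrN. by rewrite !eqxx. Qed.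

Lemma conjN' (R : realType) (z : R[i]) : (- z)^* = - z^*.
Proof. case: z => a b. by []. Qed.

Lemma conj_sum (R : realType) (I : Type) (s : seq I) (P : pred I) (F : I -> R[i]) :
  (\sum_(i <- s | P i) F i)^* = \sum_(i <- s | P i) (F i)^*.
Proof.
apply: (big_morph (fun z : R[i] => z^*)) => [a b|]; first exact: conjD'.
apply/eqP; rewrite eq_complex /=. by rewrite oppr0 !eqxx.
Qed.

Lemma conj_eq0' (R : realType) (z : R[i]) : z = 0 -> z^* = 0.
Proof. move=> ->. apply/eqP; rewrite eq_complex /=. by rewrite oppr0 !eqxx. Qed.

Lemma rc2 (R : realType) (s : R) : real_complex R (2 * s) = 2 * real_complex R s.
Proof. by rewrite rmorphM /= rmorph_nat. Qed.

Lemma cancel2 (R : realType) (x y : R[i]) : 2 * x = 2 * y -> x = y.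
Proof. apply: mulfI. by rewrite pnatr_eq0. Qed.

Lemma sum_enum (A : finType) (V : nmodType) (P : pred A) (F : A -> V) :
  \sum_(b <- enum A | P b) F b = \sum_(b | P b) F b.
Proof. rewrite enumT. reflexivity. Qed.

Definition Fd {V0 A0 : finType} (t0 : A0 -> V0) (inv0 : A0 -> A0) {r : nat}
  (att : 'I_r -> V0) {R : realType} (p : tarc A0 r -> R)
  (Psi : tarc A0 r -> R[i]) (u : tvert V0 r) : R[i] :=
  \sum_(b <- inarcs t0 att u) real_complex R (Num.sqrt (p (ainv inv0 b))) * Psi b.

Lemma ater_ainv (V0 A0 : finType) (o0 t0 : A0 -> V0) (inv0 : A0 -> A0) (r : nat)
  (att : 'I_r -> V0) :
  (forall a, inv0 (inv0 a) = a) -> (forall a, o0 (inv0 a) = t0 a) ->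
  forall a : tarc A0 r, ater t0 att (ainv inv0 a) = aorg o0 att a.
Proof.
move=> hinv hot a.
by rewrite -(aorg_ainv att hot (ainv inv0 a)) (ainvK hinv).
Qed.
Arguments ater_ainv {V0 A0 o0 t0 inv0 r} att.

Lemma Uop_eq (V0 A0 : finType) (o0 t0 : A0 -> V0) (inv0 : A0 -> A0) (r : nat)
  (att : 'I_r -> V0) (R : realType) (p : tarc A0 r -> R) :
  (forall a, inv0 (inv0 a) = a) -> (forall a, o0 (inv0 a) = t0 a) ->
  (forall a, 0 <= p a) ->
  forall (Psi : tarc A0 r -> R[i]) a,
  Uop o0 t0 inv0 att p Psi a =
  real_complex R (2 * Num.sqrt (p a)) * Fd t0 inv0 att p Psi (aorg o0 att a)
  - Psi (ainv inv0 a).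
Proof.
move=> hinv hot hp Psi a.
rewrite /Uop /Fd.
under eq_bigr => b _ do rewrite mulrBl.
rewrite sumrB mulr_sumr; congr (_ - _).
  apply: eq_bigr => b _.
  by rewrite sqrtrM // mulrA rmorphM /= mulrA.
have hin : ainv inv0 a \in inarcs t0 att (aorg o0 att a).
  by rewrite mem_inarcs (ater_ainv att hinv hot).
rewrite (eq_bigr (fun b => if b == ainv inv0 a then Psi b else 0)); last first.
  move=> b _; rewrite eq_sym; case: eqP => _; first by rewrite mul1r.
  by rewrite mul0r.
rewrite -big_mkcond -big_filter.
have -> : [seq b <- inarcs t0 att (aorg o0 att a) | b == ainv inv0 a] = [:: ainv inv0 a].
  exact: (filter_pred1_uniq (inarcs_uniq t0 att _) hin).
by rewrite big_seq1.
Qed.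
Arguments Uop_eq {V0 A0 o0 t0 inv0 r att R p}.

Lemma Fd_tail (V0 A0 : finType) (t0 : A0 -> V0) (inv0 : A0 -> A0) (r : nat)
  (att : 'I_r -> V0) (R : realType) (p : tarc A0 r -> R) (Psi : tarc A0 r -> R[i]) :
  (forall a, is_tail_arc a -> Psi a = 0) ->
  forall j n, Fd t0 inv0 att p Psi (VTail j n) = 0.
Proof.
move=> h j n; rewrite /Fd /= big_cons big_seq1 !h //.
by rewrite !mulr0 addr0.
Qed.
Arguments Fd_tail {V0 A0 t0 inv0 r att R p Psi}.

Lemma Fd_VIn (V0 A0 : finType) (t0 : A0 -> V0) (inv0 : A0 -> A0) (r : nat)
  (att : 'I_r -> V0) (R : realType) (p : tarc A0 r -> R) (Psi : tarc A0 r -> R[i]) :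
  (forall a, is_tail_arc a -> Psi a = 0) ->
  forall v, Fd t0 inv0 att p Psi (VIn v) =
    \sum_(b | t0 b == v) real_complex R (Num.sqrt (p (AIn (inv0 b)))) * Psi (AIn b).
Proof.
move=> h v; rewrite /Fd /= big_cat /= !big_map !big_filter.
rewrite [X in _ + X]big1 ?addr0; last by move=> j _; rewrite h // mulr0.
by rewrite sum_enum.
Qed.
Arguments Fd_VIn {V0 A0 t0 inv0 r att R p Psi}.

Lemma out_sum (V0 A0 : finType) (o0 : A0 -> V0) (r : nat)
  (att : 'I_r -> V0) (R : realType) (p : tarc A0 r -> R) v :
  \sum_(a <- outarcs o0 att (VIn v)) p a =
  \sum_(b | o0 b == v) p (AIn b) + \sum_(j | att j == v) p (AOut j 0).
Proof.
by rewrite /= big_cat /= !big_map !big_filter !sum_enum.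
Qed.
Arguments out_sum {V0 A0 o0 r att R} p v.

Lemma rev_zero (V0 A0 : finType) (o0 t0 : A0 -> V0) (inv0 : A0 -> A0) (r : nat)
  (att : 'I_r -> V0) (R : realType) (p : tarc A0 r -> R) :
  (forall a, inv0 (inv0 a) = a) -> (forall a, o0 (inv0 a) = t0 a) ->
  (forall a, 0 <= p a) ->
  ~ (exists (mV : tvert V0 r -> R) (mE : tarc A0 r -> R),
       (exists v, mV v != 0) /\
       (forall a, mE (ainv inv0 a) = mE a) /\
       (forall a, p a * mV (aorg o0 att a) = p (ainv inv0 a) * mV (ater t0 att a)
                  /\ p (ainv inv0 a) * mV (ater t0 att a) = mE a)) ->
  forall G : tvert V0 r -> R[i],
  (forall a, real_complex R (Num.sqrt (p a)) * G (aorg o0 att a) =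
             real_complex R (Num.sqrt (p (ainv inv0 a))) * G (ater t0 att a)) ->
  forall u, G u = 0.
Proof.
move=> hinv hot hp nrev G hG u.
have key : forall a, p a * Nc (G (aorg o0 att a)) =
                     p (ainv inv0 a) * Nc (G (ater t0 att a)).
  move=> a; rewrite -{1}(sqr_sqrtr (hp a)) -{1}(sqr_sqrtr (hp (ainv inv0 a))) -!NcM.
  by rewrite hG.
case: (eqVneq (G u) 0) => // Hu; exfalso; apply: nrev.
exists (fun v => Nc (G v)), (fun a => p a * Nc (G (aorg o0 att a))).
split; first by exists u; apply/eqP => /Nc_eq0; apply/eqP.
split; first by move=> a /=; rewrite (aorg_ainv att hot) -key.
by move=> a; split; [exact: key | rewrite -key].
Qed.
Arguments rev_zero {V0 A0 o0 t0 inv0 r att R p}.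

Lemma energy (A0 V0 : finType) (R : realType) (inv0 : A0 -> A0) (o0 t0 : A0 -> V0)
  (s : A0 -> R) (P : V0 -> R) (x : A0 -> R[i]) (Y : V0 -> R[i]) :
  (forall b, inv0 (inv0 b) = b) -> (forall b, o0 (inv0 b) = t0 b) ->
  (forall v, \sum_(b | o0 b == v) s b ^+ 2 + P v = 1) ->
  (forall b, x b + x (inv0 b) = real_complex R (2 * s b) * Y (o0 b)) ->
  (forall v, Y v = \sum_(b | t0 b == v) real_complex R (s (inv0 b)) * x b) ->
  \sum_v P v * Nc (Y v) = 0.
Proof.
move=> hinv hot hsum hx hY.
have hx' : forall b, x b + x (inv0 b) = real_complex R (2 * s (inv0 b)) * Y (t0 b).
  by move=> b; rewrite -hot -hx hinv addrC.
have h4 : (2 : R) * 2 = 4 by rewrite -natrM.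
set E := \sum_b Nc (x b + x (inv0 b)).
have E1 : E = 4 * \sum_v (1 - P v) * Nc (Y v).
  rewrite /E (eq_bigr (fun b => 4 * (s b ^+ 2 * Nc (Y (o0 b))))); last first.
    by move=> b _; rewrite hx NcM exprMn expr2 h4 mulrA.
  rewrite -mulr_sumr; congr (_ * _).
  rewrite (partition_big o0 xpredT) //=.
  apply: eq_bigr => v _.
  have -> : 1 - P v = \sum_(b | o0 b == v) s b ^+ 2 by rewrite -(hsum v) addrK.
  rewrite mulr_suml; apply: eq_bigr => b /eqP -> //.
have E2 : E = 4 * \sum_v Nc (Y v).
  have -> : E = \sum_b Dc (x b + x (inv0 b)) (x b) +
                \sum_b Dc (x b + x (inv0 b)) (x (inv0 b)).
    by rewrite /E -big_split /=; apply: eq_bigr => b _; rewrite NcE DcDr.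
  rewrite [X in _ + X](reindex_inj (can_inj hinv)) /=.
  under [X in _ + X]eq_bigr => b _ do rewrite hinv [x (inv0 b) + _]addrC.
  rewrite -mulr2n.
  rewrite (eq_bigr (fun b => 2 * Dc (Y (t0 b)) (real_complex R (s (inv0 b)) * x b)));
    last by move=> b _; rewrite hx' DcMl DcMr mulrA.
  rewrite -mulr_sumr -[X in X = _]mulr_natl mulrA h4; congr (_ * _).
  rewrite (partition_big t0 xpredT) //=.
  apply: eq_bigr => v _.
  rewrite NcE {2}hY Dc_sumr.
  by apply: eq_bigr => b /eqP ->.
have : 4 * \sum_v (1 - P v) * Nc (Y v) = 4 * \sum_v Nc (Y v) by rewrite -E1 -E2.
have h4n : (4 : R) != 0 by rewrite pnatr_eq0.
move/(mulfI h4n) => H.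
have H' : \sum_v Nc (Y v) - \sum_v P v * Nc (Y v) = \sum_v Nc (Y v).
  by rewrite -sumrB -H; apply: eq_bigr => v _; rewrite mulrBl mul1r.
by move: H' => /eqP; rewrite -subr_eq0 addrAC subrr add0r oppr_eq0 => /eqP.
Qed.

Lemma inv_abs (A0 V0 : finType) (R : realType) (inv0 : A0 -> A0) (o0 t0 : A0 -> V0)
  (s : A0 -> R) (c : A0 -> R[i]) (F : V0 -> R[i]) (y : A0 -> R[i]) :
  (forall b, inv0 (inv0 b) = b) -> (forall b, o0 (inv0 b) = t0 b) ->
  (forall b, c (inv0 b) = - c b) ->
  (forall v, \sum_(b | t0 b == v) real_complex R (s (inv0 b)) * c b = 0) ->
  \sum_b c b * (real_complex R (2 * s b) * F (o0 b) - y (inv0 b)) = \sum_b c b * y b.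
Proof.
move=> hinv hot hc hv.
under eq_bigr => b _ do rewrite mulrBr.
rewrite sumrB.
have -> : \sum_b c b * (real_complex R (2 * s b) * F (o0 b)) = 0.
  rewrite (partition_big o0 xpredT) //=; apply: big1 => v _.
  rewrite (eq_bigr (fun b => 2 * F v * (real_complex R (s b) * c b))); last first.
    move=> b /eqP ->.
    by rewrite rc2 mulrC -!mulrA; congr (_ * _); rewrite mulrC -mulrA; congr (_ * _); rewrite mulrC.
  rewrite -mulr_sumr.
  have -> : \sum_(b | o0 b == v) real_complex R (s b) * c b = 0; last by rewrite mulr0.
  rewrite (reindex_inj (can_inj hinv)) /=.
  under eq_bigr => b _ do rewrite hc mulrN.
  rewrite sumrN (eq_bigl (fun b => t0 b == v)) ?hv ?oppr0 //.
  by move=> b; rewrite /= hot.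
rewrite sub0r (reindex_inj (can_inj hinv)) /=.
under eq_bigr => b _ do rewrite hinv hc mulNr.
by rewrite sumrN opprK.
Qed.

Lemma two_eq (R : realType) (u v X1 X2 : R[i]) : u = X1 - v -> v = X2 - u -> X1 = X2.
Proof.
move=> e1 e2.
have h1 : X1 = u + v by rewrite e1 subrK.
have h2 : X2 = v + u by rewrite e2 subrK.
by rewrite h1 h2 addrC.
Qed.
Arguments two_eq {R u v X1 X2}.

Theorem theorem3p5
  (V0 A0 : finType) (o0 t0 : A0 -> V0) (inv0 : A0 -> A0)
  (r : nat) (att : 'I_r -> V0) (R : realType) (p : tarc A0 r -> R)
  (alpha : 'I_r -> R[i]) (Psi_inf : tarc A0 r -> R[i]) :
  (* G_0 is a finite symmetric directed graph; r >= 1 tails *)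
  (forall a, inv0 (inv0 a) = a) ->
  (forall a, inv0 a != a) ->
  (forall a, o0 (inv0 a) = t0 a) ->
  (0 < r)%N ->
  (* transition probabilities p : A~ -> (0,1] *)
  (forall a, 0 < p a <= 1) ->
  (forall u, \sum_(a <- outarcs o0 att u) p a = 1) ->
  (forall a, is_tail_arc a ->
     (forall j, a != ainv inv0 (e_ A0 j)) -> p a = 2^-1) ->
  (* non-reversibility *)
  ~ (exists (mV : tvert V0 r -> R) (mE : tarc A0 r -> R),
       (exists v, mV v != 0) /\
       (forall a, mE (ainv inv0 a) = mE a) /\
       (forall a, p a * mV (aorg o0 att a) = p (ainv inv0 a) * mV (ater t0 att a)
                  /\ p (ainv inv0 a) * mV (ater t0 att a) = mE a)) ->
  (* Psi_inf is the stationary state: pointwise limit of U^n Psi_0 *)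
  (forall a, Psi_n o0 t0 inv0 att p alpha n a @[n --> \oo] --> Psi_inf a) ->
  (* beta_out = - alpha_in *)
  (forall j, Psi_inf (ainv inv0 (e_ A0 j)) = - Psi_inf (e_ A0 j)) /\
  (* 1. *)
  (forall u, \sum_(a <- inarcs t0 att u)
               real_complex R (Num.sqrt (p (ainv inv0 a))) * Psi_inf a = 0) /\
  (* 2. *)
  (forall a, Psi_inf (ainv inv0 a) = - Psi_inf a) /\
  (* 3. orthogonality to ker(1 - chi^* E_PON chi) *)
  (forall phi : tarc A0 r -> R[i],
     phi = chistar (E_PON o0 t0 inv0 att p (chi phi)) ->
     \sum_(a : A0) (phi (AIn a))^* * Psi_inf (AIn a) = 0).
Proof.
move=> hinv hneq hot hr hp hsum htail nrev hlim.
have hp0 : forall a, 0 <= p a by move=> a; case/andP: (hp a) => /ltW.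
have hfix : forall a, Psi_inf a = Uop o0 t0 inv0 att p Psi_inf a.
  move=> a.
  apply: (@lim_uniqC R (fun n => Psi_n o0 t0 inv0 att p alpha n.+1 a)).
    exact: (@shiftC R (fun n => Psi_n o0 t0 inv0 att p alpha n a) (Psi_inf a) (hlim a)).
  have -> : (fun n => Psi_n o0 t0 inv0 att p alpha n.+1 a) =
    (fun n => \sum_(b <- inarcs t0 att (aorg o0 att a))
       (real_complex R (2 * Num.sqrt (p a * p (ainv inv0 b))) -
          (if ainv inv0 a == b then 1 else 0)) * Psi_n o0 t0 inv0 att p alpha n b).
    by apply: funext => n; rewrite /Psi_n iterS.
  exact: (@cvg_lin R _ (inarcs t0 att (aorg o0 att a))
    (fun b => real_complex R (2 * Num.sqrt (p a * p (ainv inv0 b))) -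
          (if ainv inv0 a == b then 1 else 0))
    (fun n b => Psi_n o0 t0 inv0 att p alpha n b) Psi_inf hlim).
set F := Fd t0 inv0 att p Psi_inf.
have hA : forall a, Psi_inf a = real_complex R (2 * Num.sqrt (p a)) * F (aorg o0 att a)
                                 - Psi_inf (ainv inv0 a).
  by move=> a; rewrite {1}hfix (Uop_eq hinv hot hp0).
have hB : forall a, real_complex R (Num.sqrt (p a)) * F (aorg o0 att a) =
          real_complex R (Num.sqrt (p (ainv inv0 a))) * F (ater t0 att a).
  move=> a; apply: cancel2; rewrite !mulrA -!rc2.
  have e2 := hA (ainv inv0 a).
  rewrite (ainvK hinv) (aorg_ainv att hot) in e2.
  exact: (two_eq (hA a) e2).
have hF0 : forall u, F u = 0 := rev_zero hinv hot hp0 nrev F hB.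
have hanti : forall a, Psi_inf (ainv inv0 a) = - Psi_inf a.
  by move=> a; rewrite (hA a) hF0 mulr0 sub0r opprK.
split; first by move=> j; exact: hanti.
split; first by move=> u; exact: (hF0 u).
split; first exact: hanti.
move=> phi hphi.
have phi_tail : forall a, is_tail_arc a -> phi a = 0.
  by move=> [b|j n|j n] //= _; rewrite hphi.
have hcc : chistar (chi phi) = phi.
  by apply: funext => -[b|j n|j n] //=; rewrite phi_tail.
have hphiU : forall b, phi (AIn b) = Uop o0 t0 inv0 att p phi (AIn b).
  move=> b; transitivity (chistar (E_PON o0 t0 inv0 att p (chi phi)) (@AIn A0 r b)).
    by rewrite -hphi.
  by rewrite -[in RHS]hcc.
set G := Fd t0 inv0 att p phi.
have hGtail : forall j n, G (VTail j n) = 0 := Fd_tail phi_tail.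
have hAphi : forall b, phi (AIn b) =
    real_complex R (2 * Num.sqrt (p (AIn b))) * G (VIn (o0 b)) - phi (AIn (inv0 b)).
  by move=> b; rewrite {1}hphiU (Uop_eq hinv hot hp0).
have hEn : \sum_v (\sum_(j | att j == v) p (AOut j 0)) * Nc (G (VIn v)) = 0.
  apply: (@energy A0 V0 R inv0 o0 t0 (fun b => Num.sqrt (p (AIn b)))
            (fun v => \sum_(j | att j == v) p (AOut j 0)) (fun b => phi (AIn b))
            (fun v => G (VIn v)) hinv hot).
  - move=> v; rewrite -(hsum (VIn v)) out_sum; congr (_ + _).
    by apply: eq_bigr => b _; rewrite sqr_sqrtr.
  - by move=> b; rewrite /= (hAphi b) subrK.
  - by move=> v; rewrite /G (Fd_VIn phi_tail).
have hGatt : forall j, G (VIn (att j)) = 0.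
  move=> j; apply: Nc_eq0.
  have hPpos : 0 < \sum_(k | att k == att j) p (AOut k 0).
    rewrite (bigD1 j) //=.
    apply: (@lt_le_trans _ _ (p (AOut j 0))); first by case/andP: (hp (AOut j 0)).
    by rewrite lerDl sumr_ge0 // => k _; exact: hp0.
  have h0 : forall v, true -> 0 <= (\sum_(j | att j == v) p (AOut j 0)) * Nc (G (VIn v)).
    by move=> v _; rewrite mulr_ge0 ?Nc_ge0 // sumr_ge0 // => k _; exact: hp0.
  have := psumr_eq0P h0 hEn (i := att j) isT.
  by move=> /eqP; rewrite mulf_eq0 (gt_eqF hPpos) /= => /eqP.
have hGall : forall a, real_complex R (Num.sqrt (p a)) * G (aorg o0 att a) =
          real_complex R (Num.sqrt (p (ainv inv0 a))) * G (ater t0 att a).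
  have hGt : forall j n, G (tailv att j n) = 0.
    by move=> j [|m] /=; [exact: hGatt | exact: hGtail].
  case=> [b|j n|j n] /=.
  - apply: cancel2; rewrite !mulrA -!rc2.
    have e2 := hAphi (inv0 b).
    rewrite hinv hot in e2.
    exact: (two_eq (hAphi b) e2).
  - by rewrite hGt hGtail !mulr0.
  - by rewrite hGt hGtail !mulr0.
have hG0 : forall u, G u = 0 := rev_zero hinv hot hp0 nrev G hGall.
have hanti_phi : forall b, phi (AIn (inv0 b)) = - phi (AIn b).
  by move=> b; rewrite (hAphi b) hG0 mulr0 sub0r opprK.
set c := fun b => (phi (AIn b))^*.
have hc : forall b, c (inv0 b) = - c b by move=> b; rewrite /c hanti_phi conjN'.
have hcv : forall v, \sum_(b | t0 b == v)
    real_complex R (Num.sqrt (p (AIn (inv0 b)))) * c b = 0.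
  move=> v; transitivity ((G (VIn v))^*); last exact: (@conj_eq0' R _ (hG0 (VIn v))).
  rewrite /G (Fd_VIn phi_tail) conj_sum.
  by apply: eq_bigr => b _; rewrite conjM_rc.
have hinvar : forall n, \sum_b c b * Psi_n o0 t0 inv0 att p alpha n (AIn b) = 0.
  elim=> [|n IH].
    by apply: big1 => b _; rewrite /Psi_n /= mulr0.
  transitivity (\sum_b c b * Psi_n o0 t0 inv0 att p alpha n (AIn b)); last exact: IH.
  have e : forall b, Psi_n o0 t0 inv0 att p alpha n.+1 (AIn b) =
      real_complex R (2 * Num.sqrt (p (AIn b))) *
        Fd t0 inv0 att p (Psi_n o0 t0 inv0 att p alpha n) (VIn (o0 b))
      - Psi_n o0 t0 inv0 att p alpha n (AIn (inv0 b)).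
    by move=> b; rewrite /Psi_n iterS (Uop_eq hinv hot hp0).
  under eq_bigr => b _ do rewrite e.
  exact: (@inv_abs A0 V0 R inv0 o0 t0 (fun b => Num.sqrt (p (AIn b))) c
            (fun v => Fd t0 inv0 att p (Psi_n o0 t0 inv0 att p alpha n) (VIn v))
            (fun b => Psi_n o0 t0 inv0 att p alpha n (AIn b)) hinv hot hc hcv).
have hl := @cvg_lin R A0 (index_enum A0) c
  (fun n b => Psi_n o0 t0 inv0 att p alpha n (AIn b)) (fun b => Psi_inf (AIn b))
  (fun b => hlim (AIn b)).
apply: (@lim_uniqC R (fun n => \sum_(b <- index_enum A0) c b *
                        Psi_n o0 t0 inv0 att p alpha n (AIn b))).
  exact: hl.
have -> : (fun n => \sum_(b <- index_enum A0) c b *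
                        Psi_n o0 t0 inv0 att p alpha n (AIn b)) = (fun _ => 0).
  by apply: funext => n; exact: hinvar.
exact: (@cvg_cst R[i] 0).
Qed.
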